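(* Let $\overrightarrow{W}$ be a Morse sequence on a simplicial complex $K$. Then for every $p$, $\partial_p\circ\widetilde{\curlywedge}_p=\widetilde{\curlywedge}_{p-1}\circ\widehat{\partial}_p$ and $\delta_p\circ\widetilde{\curlyvee}_p=\widetilde{\curlyvee}_{p+1}\circ\widehat{\delta}_p$ as maps on $\widehat W[p]$.
   Context: A simplicial complex $K$ is a finite collection of non-empty finite sets closed under taking non-empty subsets; $\dim\sigma=|\sigma|-1$, $K^{(p)}$ the set of $p$-simplices. A pair $(\sigma,\tau)$ with $\sigma\subsetneq\tau$ is a free pair for $K$ if $\tau$ is the only simplex other than $\sigma$ containing $\sigma$; $K$ is then an elementary expansion of $K\setminus\{\sigma,\tau\}$. If $\nu$ is a facet (maximal simplex) of $K$, $K$ is an elementary filling of $K\setminus\{\nu\}$. A Morse sequence on $K$ is a sequence $\langle\emptyset=K_0,\dots,K_k=K\rangle$ with each $K_i$ an elementary expansion or filling of $K_{i-1}$; simplices added by fillings are critical; for an expansion $K_i=K_{i-1}\cup\{\sigma,\tau\}$, $\sigma\subset\tau$, $\sigma$ is lower regular and $\tau$ upper regular. $\widehat W$ is the set of critical simplices. $K[p]$ is the $\mathbb{Z}_2$-vector space of subsets of $K^{(p)}$ (sum = symmetric difference, $0=\emptyset$), $\widehat W[p]=\{c\in K[p]:c\subseteq\widehat W\}$. For $\sigma\in K^{(p)}$, $\partial(\sigma)=\{\tau\in K^{(p-1)}:\tau\subset\sigma\}$, $\delta(\sigma)=\{\tau\in K^{(p+1)}:\sigma\subset\tau\}$, with linear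 extensions $\partial_p:K[p]\to K[p-1]$, $\delta_p:K[p]\to K[p+1]$. The reference map $\curlywedge$ is the unique map assigning to each $p$-simplex an element of $\widehat W[p]$, extended linearly, with $\curlywedge(\nu)=\{\nu\}$ for critical $\nu$ and $\curlywedge(\tau)=0=\curlywedge(\partial(\tau))$ for upper regular $\tau$; the coreference map $\curlyvee$ is the unique such map with $\curlyvee(\nu)=\{\nu\}$ for critical $\nu$ and $\curlyvee(\sigma)=0=\curlyvee(\delta(\sigma))$ for lower regular $\sigma$. $\widehat\partial_p:\widehat W[p]\to\widehat W[p-1]$, $\widehat\partial_p(c)=\curlywedge(\partial_p(c))$, and $\widehat\delta_p:\widehat W[p]\to\widehat W[p+1]$, $\widehat\delta_p(c)=\curlyvee(\delta_p(c))$. The extension map $\widetilde\curlywedge_p:\widehat W[p]\to K[p]$ and coextension map $\widetilde\curlyvee_p:\widehat W[p]\to K[p]$ are the linear maps with $\widetilde\curlywedge(\kappa)=\{\nu\in K:\kappa\in\curlyvee(\nu)\}$ and $\widetilde\curlyvee(\kappa)=\{\nu\in K:\kappa\in\curlywedge(\nu)\}$ for critical $p$-simplices $\kappa$. *)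

(* Defs.v *)
(* Finite simplicial complexes over a finite vertex type V;
   simplices are nonempty {set V}; chains over Z_2 are sets of simplices. *)
From mathcomp Require Import all_boot.
Set Implicit Arguments. Unset Strict Implicit. Unset Printing Implicit Defensive.

Section Defs.
Variable V : finType.
Notation simplex := {set V}.
Notation chain := {set {set V}}.

Definition is_complex (C : chain) : Prop :=
  set0 \notin C /\
  forall s t : simplex, s \in C -> t \subset s -> t != set0 -> t \in C.

Definition free_pair (C : chain) (s t : simplex) : Prop :=
  s \proper t /\ s \in C /\ t \in C /\
  forall u : simplex, u \in C -> s \subset u -> u != s -> u = t.

Definition facet (C : chain) (n : simplex) : Prop :=
  n \in C /\ forall u : simplex, u \in C -> n \subset u -> u = n.

(* a step of a Morse sequence: an elementary filling (adding a critical
   simplex) or an elementary expansion (adding a free pair (s, t)) *)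
Inductive step := Fill of simplex | Exp of simplex & simplex.

Definition added (st : step) : chain :=
  match st with Fill n => [set n] | Exp s t => [set s; t] end.

Definition valid_step (L : chain) (st : step) : Prop :=
  match st with
  | Fill n => n \notin L /\ is_complex (n |: L) /\ facet (n |: L) n
  | Exp s t => s \notin L /\ t \notin L /\ s != t /\
               is_complex (L :|: [set s; t]) /\ free_pair (L :|: [set s; t]) s t
  end.

Fixpoint morse_from (L K : chain) (W : seq step) : Prop :=
  match W with
  | [::] => L = K
  | st :: W' => valid_step L st /\ morse_from (L :|: added st) K W'
  end.

Definition morse_seq (K : chain) (W : seq step) : Prop := morse_from set0 K W.

Definition crit (W : seq step) : chain :=
  [set n | has (fun st => if st is Fill m then m == n else false) W].
Definition lower_reg (W : seq step) : chain :=
  [set n | has (fun st => if st is Exp s _ then s == n else false) W].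
Definition upper_reg (W : seq step) : chain :=
  [set n | has (fun st => if st is Exp _ t then t == n else false) W].

(* Z_2 sum of chains = symmetric difference *)
Definition symd (A B : chain) : chain := (A :\: B) :|: (B :\: A).

Definition lin (f : simplex -> chain) (c : chain) : chain :=
  \big[symd/set0]_(s in c) f s.

Definition pskel (K : chain) (p : nat) : chain := [set s in K | #|s| == p.+1].

(* \hat W[p] : chains of critical p-simplices (as a set of allowed simplices) *)
Definition critp (K : chain) (W : seq step) (p : nat) : chain :=
  [set s in crit W | (s \in K) && (#|s| == p.+1)].

Definition bd (K : chain) (s : simplex) : chain :=
  [set t in K | (t \subset s) && (#|t|.+1 == #|s|)].
Definition cobd (K : chain) (s : simplex) : chain :=
  [set t in K | (s \subset t) && (#|t| == #|s|.+1)].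

(* characterizing properties of the reference map ∧ *)
Definition is_reference (K : chain) (W : seq step) (f : simplex -> chain) : Prop :=
  (forall s : simplex, s \in K -> f s \subset critp K W #|s|.-1) /\
  (forall n : simplex, n \in crit W -> f n = [set n]) /\
  (forall t : simplex, t \in upper_reg W -> f t = set0 /\ lin f (bd K t) = set0).

(* characterizing properties of the coreference map ∨ *)
Definition is_coreference (K : chain) (W : seq step) (g : simplex -> chain) : Prop :=
  (forall s : simplex, s \in K -> g s \subset critp K W #|s|.-1) /\
  (forall n : simplex, n \in crit W -> g n = [set n]) /\
  (forall s : simplex, s \in lower_reg W -> g s = set0 /\ lin g (cobd K s) = set0).

(* extension map: ext g k = {ν ∈ K : k ∈ g ν}; with g = ∨ this is \tilde∧,
   with g = ∧ it is the coextension \tilde∨ *)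
Definition ext (K : chain) (g : simplex -> chain) (k : simplex) : chain :=
  [set n in K | k \in g n].

End Defs.

(* Main.v *)
Require Import Defs.
From mathcomp Require Import all_boot.
Set Implicit Arguments. Unset Strict Implicit. Unset Printing Implicit Defensive.

Section Lin.
Variable V : finType.
Notation simplex := {set V}.
Notation chain := {set {set V}}.

Lemma symd_mem (A B : chain) x : (x \in symd A B) = (x \in A) (+) (x \in B).
Proof. by rewrite /symd !inE; case: (x \in A); case: (x \in B). Qed.

Lemma lin_memE (f : simplex -> chain) c x :
  (x \in lin f c) = \big[addb/false]_(s in c) (x \in f s).
Proof.
rewrite /lin; apply: (big_morph (fun A : chain => x \in A)).
- by move=> A B; exact: symd_mem.
- by rewrite inE.
Qed.

Lemma xor_card (T : finType) (P : pred T) :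
  \big[addb/false]_(i | P i) true = odd #|P|.
Proof.
rewrite big_const; elim: #|P| => //= n ->.
Qed.

Lemma lin_comp (f g : simplex -> chain) c :
  lin f (lin g c) = lin (fun r => lin f (g r)) c.
Proof.
apply/setP => x; rewrite !lin_memE.
under [RHS]eq_bigr => r _ do rewrite lin_memE.
rewrite (big_mkcond (fun s => s \in lin g c)).
under eq_bigr => s _ do rewrite lin_memE.
have -> : \big[addb/false]_s (if \big[addb/false]_(r in c) (s \in g r) then x \in f s else false)
  = \big[addb/false]_s (\big[addb/false]_(r in c) ((s \in g r) && (x \in f s))).
  apply: eq_bigr => s _; rewrite -big_distrl /=.
  by case: (\big[addb/false]_(r in c) (s \in g r)).
rewrite exchange_big /=; apply: eq_bigr => r _.
by rewrite [RHS]big_mkcond /=; apply: eq_bigr => s _; case: (s \in g r).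
Qed.

Lemma lin_symd (f : simplex -> chain) a b :
  lin f (symd a b) = symd (lin f a) (lin f b).
Proof.
apply/setP => x; rewrite symd_mem !lin_memE.
rewrite (big_mkcond (fun s => s \in symd a b)) (big_mkcond (fun s => s \in a))
  (big_mkcond (fun s => s \in b)) -big_split /=.
apply: eq_bigr => s _; rewrite symd_mem.
by case: (s \in a); case: (s \in b); case: (x \in f s).
Qed.

Lemma lin_eq (f g : simplex -> chain) (c : chain) :
  {in c, f =1 g} -> lin f c = lin g c.
Proof. by move=> e; rewrite /lin; apply: eq_bigr => s /e. Qed.

Lemma lin0f (f : simplex -> chain) (c : chain) :
  {in c, forall s, f s = set0} -> lin f c = set0.
Proof.
move=> e; apply/setP => x; rewrite lin_memE inE big1 // => s /e ->; by rewrite inE.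
Qed.

Lemma lin_id c : lin (fun s : simplex => [set s]) c = c.
Proof.
apply/setP => x; rewrite lin_memE (big_mkcond (fun s => s \in c)) /=.
rewrite (bigD1 x) //= big1 ?inE ?eqxx ?addbF; first by case: (x \in c).
by move=> s /negbTE ne; rewrite inE eq_sym ne; case: (s \in c).
Qed.

Lemma lin_sub (f : simplex -> chain) (c A : chain) :
  (forall s, f s \subset A) -> lin f c \subset A.
Proof.
move=> h; apply/subsetP => x; apply: contraTT => xA.
rewrite lin_memE big1 // => s _; apply: contraNF xA; exact: (subsetP (h s)).
Qed.

Lemma symd0 (a : chain) : symd a set0 = a.
Proof. by apply/setP => x; rewrite symd_mem inE addbF. Qed.

Lemma symd_eq0 (a b : chain) : symd a b = set0 -> a = b.
Proof.
move=> e; apply/setP => x; have := congr1 (fun A : chain => x \in A) e.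
by rewrite /= symd_mem inE; case: (x \in a); case: (x \in b).
Qed.

End Lin.

Section Half.
Variable V : finType.
Notation simplex := {set V}.
Notation chain := {set {set V}}.
Variables (K C A B : chain) (d dt f g : simplex -> chain).
Hypothesis hpart : forall n, n \in K -> [|| n \in C, n \in A | n \in B].
Hypothesis hCK : C \subset K.
Hypothesis hAK : A \subset K.
Hypothesis hdK : forall s, d s \subset K.
Hypothesis hadj : forall x nu, x \in K -> (nu \in K) && (x \in d nu) = (nu \in dt x).
Hypothesis hdd : forall nu, nu \in K -> lin d (d nu) = set0.
Hypothesis hgC : forall n, n \in C -> g n = [set n].
Hypothesis hgA : forall n, n \in A -> g n = set0 /\ lin g (dt n) = set0.
Hypothesis hfC : forall n, n \in C -> f n = [set n].
Hypothesis hfB : forall n, n \in B -> f n = set0 /\ lin f (d n) = set0.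
Hypothesis hNF : forall z : chain, z \subset K -> {subset z <= B} ->
  (forall s, s \in A -> s \notin lin d z) -> z = set0.

Let E := lin (ext K g).

Lemma E_A (a : chain) n : n \in A -> n \notin E a.
Proof.
move=> nA; rewrite /E lin_memE big1 // => k _.
by rewrite inE (proj1 (hgA nA)) inE andbF.
Qed.

Lemma E_C (a : chain) n : n \in C -> (n \in E a) = (n \in a).
Proof.
move=> nC; rewrite /E lin_memE -{2}(lin_id a) lin_memE.
apply: eq_bigr => k _; rewrite inE (hgC nC) (subsetP hCK _ nC) /= !inE.
by rewrite eq_sym.
Qed.

Lemma E_K (a : chain) : E a \subset K.
Proof. by apply: lin_sub => k; apply/subsetP => x; rewrite inE => /andP[]. Qed.

Lemma E_d (a : chain) s : s \in A -> s \notin lin d (E a).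
Proof.
move=> sA; have sK : s \in K := subsetP hAK _ sA.
rewrite /E lin_comp lin_memE big1 // => k _.
rewrite lin_memE (big_mkcond (fun nu => nu \in ext K g k)).
have -> : \big[addb/false]_nu (if nu \in ext K g k then s \in d nu else false)
   = \big[addb/false]_(nu in dt s) (k \in g nu).
  rewrite [RHS]big_mkcond; apply: eq_bigr => nu _.
  rewrite inE -(hadj nu sK).
  by case: (nu \in K); case: (k \in g nu); case: (s \in d nu).
by rewrite -lin_memE (proj2 (hgA sA)) inE.
Qed.

Lemma dd0 (z : chain) : z \subset K -> lin d (lin d z) = set0.
Proof.
move=> zK; rewrite lin_comp; apply: lin0f => nu nz; exact: hdd (subsetP zK _ nz).
Qed.

Lemma uniq_ext (y : chain) : y \subset K -> (forall n, n \in A -> n \notin y) ->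
  (forall s, s \in A -> s \notin lin d y) -> y = E (y :&: C).
Proof.
move=> yK yA dyA; apply: symd_eq0; apply: hNF.
- apply/subsetP => n; rewrite symd_mem.
  case ny: (n \in y); first by move=> _; exact: (subsetP yK _ ny).
  by move=> /= nE; exact: (subsetP (E_K _) _ nE).
- move=> n nz; have nK : n \in K.
    move: nz; rewrite symd_mem.
    case ny: (n \in y); first by move=> _; exact: (subsetP yK _ ny).
    by move=> /= nE; exact: (subsetP (E_K _) _ nE).
  case/or3P: (hpart nK) => // [nC|nA].
  + by move: nz; rewrite symd_mem E_C // inE nC andbT addbb.
  + by move: nz; rewrite symd_mem (negbTE (yA _ nA)) (negbTE (E_A _ nA)).
- move=> s sA; rewrite lin_symd symd_mem (negbTE (dyA _ sA)).
  exact: E_d.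
Qed.

Lemma lin_f_crit (w : chain) : w \subset K -> (forall n, n \in A -> n \notin w) ->
  lin f w = w :&: C.
Proof.
move=> wK wA.
rewrite (@lin_eq _ f (fun s => if s \in C then [set s] else set0)); last first.
  move=> s sw; case: ifP => [sC|nsC]; first exact: hfC.
  have sK := subsetP wK _ sw.
  case/or3P: (hpart sK) => [sC|sA|sB]; first by rewrite sC in nsC.
  - by have := wA _ sA; rewrite sw.
  - exact: (proj1 (hfB sB)).
apply/setP => x; rewrite -{1}(lin_id (w :&: C)) !lin_memE.
rewrite (big_mkcond (fun s => s \in w)) [RHS]big_mkcond; apply: eq_bigr => s _.
rewrite inE; case: (s \in w); case: (s \in C) => //=; by rewrite inE.
Qed.

Lemma half_thm (c : chain) : c \subset C -> lin d (E c) = E (lin f (lin d c)).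
Proof.
move=> cC; set X := E c.
have XK : X \subset K := E_K c.
have XA : forall n, n \in A -> n \notin X by move=> n; exact: E_A.
have cX : c \subset X.
  by apply/subsetP => n nc; rewrite /X E_C // (subsetP cC).
have XcB : {subset X :\: c <= B}.
  move=> n; rewrite inE => /andP[nc nX].
  case/or3P: (hpart (subsetP XK _ nX)) => // [nC|nA].
  - by rewrite /X E_C // in nX; rewrite nX in nc.
  - by rewrite (negbTE (XA _ nA)) in nX.
have eX : X = symd c (X :\: c).
  apply/setP => n; rewrite symd_mem inE.
  case nc: (n \in c) => /=; last by [].
  by rewrite (subsetP cX).
have yK : lin d X \subset K by apply: lin_sub.
have yA : forall n, n \in A -> n \notin lin d X by move=> n; exact: E_d.
have ey : lin d X = E (lin d X :&: C).
  by apply: uniq_ext yK yA _ => s _; rewrite dd0 // inE.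
rewrite ey -(lin_f_crit yK yA); congr E.
rewrite {1}eX lin_symd lin_symd (@lin_comp _ f d (X :\: c)).
rewrite (@lin0f _ _ (X :\: c)) ?symd0 // => t /XcB tB.
exact: (proj2 (hfB tB)).
Qed.
End Half.

Section Morse.
Variable V : finType.
Notation simplex := {set V}.
Notation chain := {set {set V}}.

Lemma crit_nil (n : simplex) : (n \in crit (@nil (step V)) :> bool) = false. Proof. by rewrite inE. Qed.
Lemma lower_nil (n : simplex) : (n \in lower_reg (@nil (step V))) = false. Proof. by rewrite inE. Qed.
Lemma upper_nil (n : simplex) : (n \in upper_reg (@nil (step V))) = false. Proof. by rewrite inE. Qed.
Lemma crit_F (n m : simplex) (W : seq (step V)) : (n \in crit (Fill m :: W)) = (m == n) || (n \in crit W).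
Proof. by rewrite !inE. Qed.
Lemma lower_F (n m : simplex) (W : seq (step V)) : (n \in lower_reg (Fill m :: W)) = (n \in lower_reg W).
Proof. by rewrite !inE. Qed.
Lemma upper_F (n m : simplex) (W : seq (step V)) : (n \in upper_reg (Fill m :: W)) = (n \in upper_reg W).
Proof. by rewrite !inE. Qed.
Lemma crit_E (n s t : simplex) (W : seq (step V)) : (n \in crit (Exp s t :: W)) = (n \in crit W).
Proof. by rewrite !inE. Qed.
Lemma lower_E (n s t : simplex) (W : seq (step V)) : (n \in lower_reg (Exp s t :: W)) = (s == n) || (n \in lower_reg W).
Proof. by rewrite !inE. Qed.
Lemma upper_E (n s t : simplex) (W : seq (step V)) : (n \in upper_reg (Exp s t :: W)) = (t == n) || (n \in upper_reg W).
Proof. by rewrite !inE. Qed.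

Definition regs (W : seq (step V)) n :=
  [|| n \in crit W, n \in lower_reg W | n \in upper_reg W].

Lemma morse_facts (W : seq (step V)) (L K : chain) : morse_from L K W ->
  [/\ L \subset K, (forall n, regs W n -> n \in K /\ n \notin L)
    & (forall n, n \in K -> (n \in L) || regs W n)].
Proof.

elim: W L => [|st W IH] L /=.
  move=> ->; split => // n; by rewrite /regs !inE /= ?orbF.
case: st => [m|s t] /= [hv hm]; have [sK hb hc] := IH _ hm.
- split.
  + by apply: subset_trans sK; apply: subsetUl.
  + move=> n; rewrite /regs (crit_F n m W) (lower_F n m W) (upper_F n m W).
    case: (m =P n) => [<- _|ne] /=.
      by split; [apply: (subsetP sK); rewrite !inE eqxx ?orbT | exact: hv.1].
    move=> /hb [nK]; rewrite !inE negb_or => /andP[nL _]; by split.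
  + move=> n /hc; rewrite /regs (crit_F n m W) (lower_F n m W) (upper_F n m W) in_setU in_set1.
    by rewrite (eq_sym m n); case: (n \in L); case: (n == m); case: (n \in crit W).
- split.
  + by apply: subset_trans sK; apply: subsetUl.
  + move=> n; rewrite /regs (crit_E n s t W) (lower_E n s t W) (upper_E n s t W).
    case: (s =P n) => [<- _|ne1].
      by split; [apply: (subsetP sK); rewrite !inE eqxx ?orbT | exact: hv.1].
    case: (t =P n) => [<- _|ne2].
      by split; [apply: (subsetP sK); rewrite !inE eqxx ?orbT | exact: hv.2.1].
    move=> /= /hb [nK]; rewrite !inE !negb_or => /andP[nL _]; by split.
  + move=> n /hc; rewrite /regs (crit_E n s t W) (lower_E n s t W) (upper_E n s t W) in_setU !in_set2.
    case: (n \in L) => //=; rewrite ![_ == n]eq_sym.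
    by case: (n == s); case: (n == t); rewrite ?orbT.
Qed.

Lemma morse_complex (W : seq (step V)) (L K : chain) : morse_from L K W ->
  is_complex L -> is_complex K.
Proof.
elim: W L => [|st W IH] L /=; first by move=> ->.
case: st => [m|s t] /= [hv hm] _; apply: (IH _ hm).
- by case: hv => _ []; rewrite setUC.
- by case: hv => _ [_ [_ []]].
Qed.

Lemma free_card (M : chain) s t : is_complex M -> free_pair M s t ->
  #|t| = #|s|.+1.
Proof.
move=> [M0 Mc] [st [sM [tM fr]]].
have [sub [x xt xs]] := properP st.
have -> : t = x |: s.
  symmetry; apply: fr.
  - apply: (Mc t) => //; first by rewrite subUset sub1set xt.
    by apply/set0Pn; exists x; rewrite !inE eqxx.
  - exact: subsetUr.
  - by apply/eqP => e; move: xs; rewrite -e !inE eqxx.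
by rewrite cardsU1 xs.
Qed.

Lemma mid_count (A B : simplex) : A \subset B -> #|B| = #|A|.+2 ->
  #|[set t : simplex | (A \subset t) && (t \subset B) && (#|t| == #|A|.+1)]| = 2.
Proof.
move=> AB cB.
have -> : [set t : simplex | (A \subset t) && (t \subset B) && (#|t| == #|A|.+1)]
   = [set x |: A | x in B :\: A].
  apply/setP => t; apply/idP/idP.
  - rewrite inE => /andP[/andP[At tB] /eqP ct].
    have : #|t :\: A| = 1.
      by rewrite cardsD (setIidPr At) ct subSn // subnn.
    move=> c1; have [x ex] := cards1P (introT eqP c1).
    have xt : x \in t :\: A by rewrite ex inE.
    apply/imsetP; exists x.
      by move: xt; rewrite !inE => /andP[-> /(subsetP tB)].
    apply/setP => y; rewrite !inE.
    case yA: (y \in A); first by rewrite orbT (subsetP At).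
    rewrite orbF; case yt: (y \in t).
      have : y \in t :\: A by rewrite inE yA yt.
      by rewrite ex inE => ->.
    by apply/esym/negbTE; apply: contraFN yt => /eqP ->; move: xt; rewrite inE => /andP[].
  - move=> /imsetP [x xBA ->]; move: xBA; rewrite !inE => /andP[xA xB].
    by rewrite subsetUr subUset sub1set xB AB cardsU1 xA add1n eqxx.
rewrite card_in_imset.
  by rewrite cardsD (setIidPr AB) cB subSn // subSn // subnn.
move=> x y; rewrite !inE => /andP[xA _] /andP[yA _] e.
have : x \in y |: A by rewrite -e !inE eqxx.
by rewrite !inE (negbTE xA) orbF => /eqP.
Qed.

End Morse.

Section DD.
Variable V : finType.
Notation simplex := {set V}.
Notation chain := {set {set V}}.

Lemma xor_sel (T : finType) (P : {pred T}) (Q : pred T) :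
  \big[addb/false]_(i in P) Q i = odd #|[set i in P | Q i]|.
Proof.
transitivity (\big[addb/false]_(i in [set i in P | Q i]) true).
  rewrite big_mkcond [RHS]big_mkcond; apply: eq_bigr => i _.
  by rewrite !inE; case: (i \in P); case: (Q i).
by rewrite big_const; elim: #|_| => //= n ->.
Qed.

Lemma nonempty_K (K : chain) (x t : simplex) : is_complex K -> x \in K -> x \subset t -> t != set0.
Proof.
move=> [K0 _] xK xt; apply/negP => /eqP t0; move: xt; rewrite t0 subset0 => /eqP x0.
by move: xK; rewrite x0 (negbTE K0).
Qed.

Lemma bd_dd (K : chain) (nu : simplex) : is_complex K -> nu \in K -> lin (bd K) (bd K nu) = set0.
Proof.
move=> hK nK; have [K0 Kc] := hK; apply/setP => x; rewrite lin_memE xor_sel inE.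
set T := [set t in bd K nu | x \in bd K t].
case: (set_0Vmem T) => [->|[t0 t0T]]; first by rewrite cards0.
move: t0T; rewrite !inE => /andP[/andP[t0K /andP[t0n /eqP c0]] /andP[xK /andP[xt0 /eqP cx]]].
have -> : T = [set t : simplex | (x \subset t) && (t \subset nu) && (#|t| == #|x|.+1)].
  apply/setP => t; rewrite !inE; apply/idP/idP.
  - move=> /andP[/andP[_ /andP[tn /eqP ct]] /andP[_ /andP[xt /eqP cxt]]].
    by rewrite xt tn -cxt eqxx.
  - move=> /andP[/andP[xt tn] /eqP ct].
    have tK : t \in K := Kc nu t nK tn (nonempty_K hK xK xt).
    by rewrite tK tn xK xt /= ct -c0 -cx !eqxx.
rewrite mid_count //; first exact: subset_trans xt0 t0n.
by rewrite -c0 -cx.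
Qed.

Lemma cobd_dd (K : chain) (rho : simplex) : is_complex K -> rho \in K ->
  lin (cobd K) (cobd K rho) = set0.
Proof.
move=> hK rK; have [K0 Kc] := hK; apply/setP => x; rewrite lin_memE xor_sel inE.
set T := [set t in cobd K rho | x \in cobd K t].
case: (set_0Vmem T) => [->|[t0 t0T]]; first by rewrite cards0.
move: t0T; rewrite !inE => /andP[/andP[t0K /andP[rt0 /eqP c0]] /andP[xK /andP[t0x /eqP cx]]].
have -> : T = [set t : simplex | (rho \subset t) && (t \subset x) && (#|t| == #|rho|.+1)].
  apply/setP => t; rewrite !inE; apply/idP/idP.
  - move=> /andP[/andP[_ /andP[rt /eqP ct]] /andP[_ /andP[tx /eqP cxt]]].
    by rewrite rt tx ct eqxx.
  - move=> /andP[/andP[rt tx] /eqP ct].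
    have tK : t \in K := Kc x t xK tx (nonempty_K hK rK rt).
    by rewrite tK tx xK rt /= ct cx c0 !eqxx.
rewrite mid_count //; first exact: subset_trans rt0 t0x.
by rewrite cx c0.
Qed.

End DD.

Section NF.
Variable V : finType.
Notation simplex := {set V}.
Notation chain := {set {set V}}.

Lemma lin1 (f : simplex -> chain) s : lin f [set s] = f s.
Proof. by rewrite /lin big_set1E symd0. Qed.

Lemma NF_up (K : chain) : is_complex K -> forall (W : seq (step V)) (L : chain),
  morse_from L K W -> forall z : chain, z \subset K -> {subset z <= upper_reg W} ->
  (forall s, s \in lower_reg W -> s \notin lin (bd K) z) -> z = set0.
Proof.
move=> hK; elim => [|st W IH] L /=.
  move=> _ z _ zU _; apply/setP => n; rewrite inE; apply/negP => /zU.
  by rewrite inE.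
case: st => [m|s t] /= [hv hm] z zK zU zL.
  apply: (IH _ hm z zK) => [n /zU|s' sL]; first by rewrite (upper_F n m W).
  by apply: zL; rewrite (lower_F s' m W).
have [Lsub Lb _] := morse_facts hm.
have [_ [_ [_ [hL' fp]]]] := hv.
have [hL'0 hL'c] := hL'.
have tL' : t \in L :|: [set s; t] by rewrite !inE eqxx !orbT.
have sL' : s \in L :|: [set s; t] by rewrite !inE eqxx orbT.
case tz: (t \in z); last first.
  apply: (IH _ hm z zK) => [n nz|s' sL].
    move: (zU n nz); rewrite (upper_E n s t W); case: (t =P n) => //= tn.
    by rewrite -tn tz in nz.
  by apply: zL; rewrite (lower_E s' s t W) sL orbT.
have ez : z = symd [set t] (z :\ t).
  apply/setP => n; rewrite symd_mem !inE.
  by case: (n =P t) => [->|] /=; rewrite ?tz.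
have z'0 : z :\ t = set0.
  apply: (IH _ hm) => [|n|s' sL].
  - exact: subset_trans (subsetDl _ _) zK.
  - rewrite in_setD1 => /andP[nt nz]; move: (zU n nz).
    by rewrite (upper_E n s t W) (eq_sym t n) (negbTE nt).
  - have := zL s'; rewrite (lower_E s' s t W) sL orbT => /(_ isT).
    rewrite {1}ez lin_symd lin1 symd_mem.
    have -> : (s' \in bd K t) = false.
      apply/negP; rewrite inE => /andP[s'K /andP[s't _]].
      have s'L' := hL'c t s' tL' s't (nonempty_K hK s'K (subxx _)).
      by have := (Lb s'); rewrite /regs sL orbT => /(_ isT) [_]; rewrite s'L'.
    by [].
have := zL s; rewrite (lower_E s s t W) eqxx => /(_ isT).
rewrite ez z'0 symd0 lin1 inE.
have [sK _] : s \in K /\ true by split => //; exact: (subsetP Lsub).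
rewrite sK.
have [st' _] := fp.
by rewrite (proper_sub st') (free_card hL' fp) eqxx.
Qed.

Lemma NF_low (K : chain) : is_complex K -> forall (W : seq (step V)) (L : chain),
  morse_from L K W -> forall z : chain, z \subset K -> {subset z <= lower_reg W} ->
  (forall s, s \in upper_reg W -> s \notin lin (cobd K) z) -> z = set0.
Proof.
move=> hK; elim => [|st W IH] L /=.
  move=> _ z _ zU _; apply/setP => n; rewrite inE; apply/negP => /zU.
  by rewrite inE.
case: st => [m|s t] /= [hv hm] z zK zU zL.
  apply: (IH _ hm z zK) => [n /zU|s' sL]; first by rewrite (lower_F n m W).
  by apply: zL; rewrite (upper_F s' m W).
have [Lsub Lb _] := morse_facts hm.
have [_ [_ [_ [hL' fp]]]] := hv.
have [hL'0 hL'c] := hL'.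
have tL' : t \in L :|: [set s; t] by rewrite !inE eqxx !orbT.
case sz: (s \in z); last first.
  apply: (IH _ hm z zK) => [n nz|s' sL].
    move: (zU n nz); rewrite (lower_E n s t W); case: (s =P n) => //= sn.
    by rewrite -sn sz in nz.
  by apply: zL; rewrite (upper_E s' s t W) sL orbT.
exfalso; have := zL t; rewrite (upper_E t s t W) eqxx => /(_ isT); apply/negP.
suff -> : (t \in lin (cobd K) z) = (s \in lin (fun s => [set s]) z) by rewrite lin_id sz.
rewrite !lin_memE (big_mkcond (fun nu => nu \in z)) [RHS]big_mkcond.
apply: eq_bigr => nu _; case nz: (nu \in z) => //.
rewrite !inE; case: (nu =P s) => [->|ns].
  have [st' _] := fp.
  rewrite (proper_sub st') (free_card hL' fp) eqxx andbT eqxx.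
  by rewrite (subsetP Lsub).
have -> : (s == nu) = false by apply/eqP => e; apply: ns; rewrite e.
apply/negbTE; apply/negP => /and3P[_ nt _].
have nK := subsetP zK _ nz.
have nL' := hL'c t nu tL' nt (nonempty_K hK nK (subxx _)).
move: (zU nu nz); rewrite (lower_E nu s t W); case: (s =P nu) => [e|_ /=].
  by rewrite e in ns.
move=> nl; have := Lb nu; rewrite /regs nl orbT => /(_ isT) [_].
by rewrite nL'.
Qed.

End NF.

Theorem theorem9 (V : finType) (K : {set {set V}}) (W : seq (step V))
  (hW : morse_seq K W)
  (up down : {set V} -> {set {set V}})
  (hup : is_reference K W up) (hdown : is_coreference K W down)
  (p : nat) (c : {set {set V}}) (hc : c \subset critp K W p) :
  lin (bd K) (lin (ext K down) c) = lin (ext K down) (lin up (lin (bd K) c)) /\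
  lin (cobd K) (lin (ext K up) c) = lin (ext K up) (lin down (lin (cobd K) c)).
Proof.
have h0 : is_complex (set0 : {set {set V}}).
  by split; [rewrite inE | move=> s t; rewrite inE].
have hK : is_complex K := morse_complex hW h0.
have [_ hb hcov] := morse_facts hW.
have [_ [hupC hupU]] := hup; have [_ [hdC hdL]] := hdown.
have cC : c \subset crit W.
  by apply: subset_trans hc _; apply/subsetP => n; rewrite inE => /andP[].
have hpart : forall n, n \in K -> [|| n \in crit W, n \in lower_reg W | n \in upper_reg W].
  by move=> n /hcov; rewrite inE.
have CK : crit W \subset K.
  by apply/subsetP => n nC; have := hb n; rewrite /regs nC => /(_ isT) [].
have LK : lower_reg W \subset K.
  by apply/subsetP => n nC; have := hb n; rewrite /regs nC orbT => /(_ isT) [].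
have UK : upper_reg W \subset K.
  by apply/subsetP => n nC; have := hb n; rewrite /regs nC !orbT => /(_ isT) [].
split.
- apply: (@half_thm V K (crit W) (lower_reg W) (upper_reg W) (bd K) (cobd K) up down) => //.
  + by move=> s; apply/subsetP => x; rewrite inE => /andP[].
  + by move=> x nu xK; rewrite !inE xK /= eq_sym.
  + by move=> nu; exact: bd_dd.
  + exact: (NF_up hK hW).
- apply: (@half_thm V K (crit W) (upper_reg W) (lower_reg W) (cobd K) (bd K) down up) => //.
  + by move=> n /hpart; case: (n \in crit W); case: (n \in lower_reg W); case: (n \in upper_reg W).
  + by move=> s; apply/subsetP => x; rewrite inE => /andP[].
  + by move=> x nu xK; rewrite !inE xK /= eq_sym.
  + by move=> nu; exact: cobd_dd.
  + exact: (NF_low hK hW).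
Qed.
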